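(* Suppose $q^{2k}\neq1$. Then there are algebra homomorphisms into $\mathrm{Cl}_q(n,k)$ defined on generators as follows. (1) For $\mathfrak{g}=\mathfrak{sl}_n$: $\Theta\colon U_q(\mathfrak{g},k)\to\mathrm{Cl}_q(n,k)$ with $E_i\mapsto\psi_i\psi_{i+1}^*$, $F_i\mapsto\psi_{i+1}\psi_i^*$, $K_i\mapsto\omega_i\omega_{i+1}^{-1}$ for $i=1,\dots,n-1$. (2) For $\mathfrak{g}=\mathfrak{so}_{2n}$: $\Theta\colon U_q(\mathfrak{g},k)\to\mathrm{Cl}_q(n,k)$ with $E_i\mapsto\psi_i\psi_{i+1}^*$, $F_i\mapsto\psi_{i+1}\psi_i^*$, $K_i\mapsto\omega_i\omega_{i+1}^{-1}$ for $i=1,\dots,n-1$, and $E_n\mapsto\psi_{n-1}\psi_n$, $F_n\mapsto\psi_n^*\psi_{n-1}^*$, $K_n\mapsto q\omega_{n-1}\omega_n$. (3) For $\mathfrak{g}=\mathfrak{so}_{2n+1}$, if $q^{1/2}\in\mathbb{k}$: an algebra homomorphism $U_{q^{1/2}}(\mathfrak{g},k)\to\mathrm{Cl}_q(n,k)$ with $E_i\mapsto\psi_i\psi_{i+1}^*$, $F_i\mapsto\psi_{i+1}\psi_i^*$, $K_i\mapsto\omega_i\omega_{i+1}^{-1}$ for $i=1,\dots,n-1$, and $E_n\mapsto\psi_n$, $F_n\mapsto\psi_n^*$, $K_n\mapsto q^{1/2}\omega_n$.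
   Context: Let $\mathbb{k}$ be a field of characteristic different from $2$, let $q\in\mathbb{k}^\times$, and let $n,k$ be positive integers. The quantum Clifford algebra $\mathrm{Cl}_q(n,k)$ is the unital associative $\mathbb{k}$-algebra generated by $\psi_a,\psi_a^*,\omega_a,\omega_a^{-1}$ for $a\in\{1,\dots,n\}$, subject to the relations (for all $a,b$): $\omega_a\omega_b=\omega_b\omega_a$; $\omega_a\omega_a^{-1}=1$; $\omega_a\psi_b=q^{\delta_{ab}}\psi_b\omega_a$; $\omega_a\psi_b^*=q^{-\delta_{ab}}\psi_b^*\omega_a$; $\psi_a\psi_b+\psi_b\psi_a=0$; $\psi_a^*\psi_b^*+\psi_b^*\psi_a^*=0$; $\psi_a\psi_a^*+q^k\psi_a^*\psi_a=\omega_a^{-k}$; $\psi_a\psi_a^*+q^{-k}\psi_a^*\psi_a=\omega_a^{k}$; $\psi_a\psi_b^*+\psi_b^*\psi_a=0$ if $a\neq b$. Twisted quantum group: let $\mathfrak{g}$ be a semisimple Lie algebra with simple roots $\alpha_1,\dots,\alpha_r$, Cartan matrix $A=(a_{ij})$ and positive coprime integers $d_i$ with $DA$ symmetric, $D=\mathrm{diag}(d_1,\dots,d_r)$. For a parameter $Q\in\mathbb{k}$ (taken transcendental, as is the standing convention in the paper's definition of $U_Q$), put $Q_i=Q^{d_i}$, $[m]_{x}=(x^m-x^{-m})/(x-x^{-1})$, $[m]_x!=[m]_x\cdots[1]_x$, and $q$-binomials $\begin{bmatrix} m\\ s\end{bmatrix}_x=[m]_x!/([s]_x![m-s]_x!)$.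 Then $U_Q(\mathfrak{g},k)$ is the unital associative $\mathbb{k}$-algebra generated by $E_i,F_i,K_i,K_i^{-1}$ ($i=1,\dots,r$) with relations $K_iK_j=K_jK_i$, $K_iK_i^{-1}=K_i^{-1}K_i=1$, $K_iE_jK_i^{-1}=Q_i^{a_{ij}}E_j$, $K_iF_jK_i^{-1}=Q_i^{-a_{ij}}F_j$, $E_iF_j-F_jE_i=\delta_{ij}\frac{K_i^k-K_i^{-k}}{Q_i^k-Q_i^{-k}}$, and for $i\neq j$ the Serre relations $\sum_{m=0}^{1-a_{ij}}(-1)^m\begin{bmatrix}1-a_{ij}\\ m\end{bmatrix}_{Q_i^k}X_i^mX_jX_i^{1-a_{ij}-m}=0$ for $X\in\{E,F\}$. Conventions (with $e_1,\dots,e_n$ orthonormal): for $\mathfrak{sl}_n$, $\alpha_i=e_i-e_{i+1}$ ($1\le i\le n-1$), all $d_i=1$; for $\mathfrak{so}_{2n}$, $\alpha_i=e_i-e_{i+1}$ ($i<n$), $\alpha_n=e_{n-1}+e_n$, all $d_i=1$; for $\mathfrak{so}_{2n+1}$, $\alpha_i=e_i-e_{i+1}$ ($i<n$), $\alpha_n=e_n$, with $d_i=2$ for $i<n$ and $d_n=1$; and $a_{ij}=2(\alpha_i,\alpha_j)/(\alpha_i,\alpha_i)$. In (1),(2) $Q=q$; in (3) $Q=q^{1/2}$. *)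

(* Defs.v *)
From HB Require Import structures.
From mathcomp Require Import all_boot all_order all_algebra.
Set Implicit Arguments. Unset Strict Implicit. Unset Printing Implicit Defensive.
Import Order.TTheory GRing.Theory Num.Theory.
Local Open Scope ring_scope.

(* Defining relations of Cl_q(n,k), for a family of elements
   psi a, psis a (the psi-star), om a (= omega_a), omi a (= omega_a^{-1})
   (a = 1..n) in a k-algebra A.  Cl_q(n,k) is the universal such family. *)
Definition Cl_relations (K : fieldType) (A : algType K) (q : K) (n k : nat)
  (psi psis om omi : nat -> A) : Prop :=
  forall a b : nat, (1 <= a <= n)%N -> (1 <= b <= n)%N ->
  om a * om b = om b * om a /\
  om a * omi a = 1 /\
  omi a * om a = 1 /\
  om a * psi b = q ^+ (a == b) *: (psi b * om a) /\
  om a * psis b = q ^- (a == b) *: (psis b * om a) /\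
  psi a * psi b + psi b * psi a = 0 /\
  psis a * psis b + psis b * psis a = 0 /\
  psi a * psis a + q ^+ k *: (psis a * psi a) = omi a ^+ k /\
  psi a * psis a + q ^- k *: (psis a * psi a) = om a ^+ k /\
  (a != b -> psi a * psis b + psis b * psi a = 0).

(* Symmetric Gaussian binomial [m choose s]_x as a Laurent polynomial in x,
   via the q-Pascal rule [m s] = x^s [m-1 s] + x^{-(m-s)} [m-1 s-1]. *)
Fixpoint qbinom (K : fieldType) (x : K) (m : nat) : nat -> K :=
  fun s =>
  match m, s with
  | _, 0%N => 1
  | 0%N, _.+1 => 0
  | m'.+1, s'.+1 => x ^+ s'.+1 * qbinom x m' s'.+1 + x ^- (m' - s') * qbinom x m' s'
  end.

Definition serre (K : fieldType) (A : algType K) (x : K) (N : nat) (Xi Xj : A) : A :=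
  \sum_(0 <= m < N.+1) ((-1) ^+ m * qbinom x N m) *: (Xi ^+ m * Xj * Xi ^+ (N - m)).

(* Defining relations of U_Q(g,k) (rank r, symmetrizers d, Cartan matrix a)
   for a family E, Fg, Kg, Ki (= K^{-1}) of elements of A. *)
Definition U_relations (K : fieldType) (A : algType K) (Q : K) (k r : nat)
  (d : nat -> nat) (a : nat -> nat -> int) (E Fg Kg Ki : nat -> A) : Prop :=
  forall i j : nat, (1 <= i <= r)%N -> (1 <= j <= r)%N ->
  let Qi := Q ^+ d i in
  Kg i * Kg j = Kg j * Kg i /\
  Kg i * Ki i = 1 /\
  Ki i * Kg i = 1 /\
  Kg i * E j * Ki i = Qi ^ (a i j) *: E j /\
  Kg i * Fg j * Ki i = Qi ^ (- a i j) *: Fg j /\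
  E i * Fg j - Fg j * E i =
    (if i == j then (Qi ^+ k - Qi ^- k)^-1 *: (Kg i ^+ k - Ki i ^+ k) else 0) /\
  (i != j ->
     serre (Qi ^+ k) `|1 - a i j|%N (E i) (E j) = 0 /\
     serre (Qi ^+ k) `|1 - a i j|%N (Fg i) (Fg j) = 0).

Definition e_ (l : nat) : nat -> int := fun m => ((m == l) : nat)%:Z.
Definition inner (n : nat) (u v : nat -> int) : int :=
  \sum_(1 <= l < n.+1) u l * v l.
Definition cartan_of (n : nat) (alpha : nat -> nat -> int) (i j : nat) : int :=
  ((2 * inner n (alpha i) (alpha j)) %/ inner n (alpha i) (alpha i))%Z.

Definition root_sl (i : nat) : nat -> int := fun m => e_ i m - e_ i.+1 m.
Definition root_so_even (n i : nat) : nat -> int :=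
  if (i < n)%N then root_sl i else fun m => e_ n.-1 m + e_ n m.
Definition root_so_odd (n i : nat) : nat -> int :=
  if (i < n)%N then root_sl i else e_ n.
Definition d_so_odd (n i : nat) : nat := if (i < n)%N then 2%N else 1%N.

Section Images.
Variables (K : fieldType) (A : algType K) (q : K) (n : nat)
  (psi psis om omi : nat -> A).

Definition Th_E (i : nat) : A := psi i * psis i.+1.
Definition Th_F (i : nat) : A := psi i.+1 * psis i.
Definition Th_K (i : nat) : A := om i * omi i.+1.
Definition Th_Ki (i : nat) : A := om i.+1 * omi i.

Definition ThD_E (i : nat) : A := if (i < n)%N then Th_E i else psi n.-1 * psi n.
Definition ThD_F (i : nat) : A := if (i < n)%N then Th_F i else psis n * psis n.-1.
Definition ThD_K (i : nat) : A := if (i < n)%N then Th_K i else q *: (om n.-1 * om n).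
Definition ThD_Ki (i : nat) : A :=
  if (i < n)%N then Th_Ki i else q^-1 *: (omi n * omi n.-1).

(* (3) so_{2n+1}, with s = q^{1/2} *)
Variable s : K.
Definition ThB_E (i : nat) : A := if (i < n)%N then Th_E i else psi n.
Definition ThB_F (i : nat) : A := if (i < n)%N then Th_F i else psis n.
Definition ThB_K (i : nat) : A := if (i < n)%N then Th_K i else s *: om n.
Definition ThB_Ki (i : nat) : A := if (i < n)%N then Th_Ki i else s^-1 *: omi n.
End Images.

(* Main.v *)
Require Import Defs.
From HB Require Import structures.
From mathcomp Require Import all_boot all_order all_algebra.
From mathcomp Require Import zify ring lra.
Set Implicit Arguments. Unset Strict Implicit. Unset Printing Implicit Defensive.
Import Order.TTheory GRing.Theory Num.Theory.
Local Open Scope ring_scope.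

Lemma inner_e n a w : (1 <= a <= n)%N -> inner n (e_ a) w = w a.
Proof.
move=> ha; rewrite /inner (bigD1_seq a) /=; last exact: iota_uniq.
  rewrite /e_ eqxx mul1r big1 ?addr0 // => l /negbTE ->; by rewrite mul0r.
by rewrite mem_index_iota ltnS.
Qed.

Lemma inner_D n u v w : inner n (fun m => u m + v m) w = inner n u w + inner n v w.
Proof. by rewrite /inner -big_split; apply: eq_bigr => l _; rewrite mulrDl. Qed.
Lemma inner_N n u w : inner n (fun m => - u m) w = - inner n u w.
Proof. by rewrite /inner -sumrN; apply: eq_bigr => l _; rewrite mulNr. Qed.
Lemma inner_Nr n u w : inner n u (fun m => - w m) = - inner n u w.
Proof. by rewrite /inner -sumrN; apply: eq_bigr => l _; rewrite mulrN. Qed.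
Lemma inner_ext n u w w' : (forall m, w m = w' m) -> inner n u w = inner n u w'.
Proof. by move=> e; rewrite /inner; apply: eq_bigr => l _; rewrite e. Qed.

Lemma inner_sl n i w : (1 <= i < n)%N -> inner n (root_sl i) w = w i - w i.+1.
Proof.
move=> /andP [h1 h2]; rewrite /root_sl inner_D inner_N !inner_e //; lia.
Qed.

Lemma e_ne l m : l != m -> e_ l m = 0.
Proof. by rewrite /e_ eq_sym => /negbTE ->. Qed.
Lemma e_eq l : e_ l l = 1.
Proof. by rewrite /e_ eqxx. Qed.

Lemma cartan_2 n (al : nat -> nat -> int) i j :
  inner n (al i) (al i) = 2 -> cartan_of n al i j = inner n (al i) (al j).
Proof. by move=> h; rewrite /cartan_of h mulKz. Qed.

Lemma inner_sl_sl n i : (1 <= i < n)%N -> inner n (root_sl i) (root_sl i) = 2.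
Proof.
move=> h; rewrite inner_sl // /root_sl e_eq e_eq !e_ne; try lia.
Qed.


Lemma e_eq' l m : l = m -> e_ l m = 1.
Proof. by move=> ->; rewrite e_eq. Qed.

Ltac ecomp := repeat first [rewrite e_ne; last by lia | rewrite e_eq'; last by lia].

Lemma inner_so_even n i w : (2 <= n)%N -> (1 <= i <= n)%N ->
  inner n (root_so_even n i) w = if (i < n)%N then w i - w i.+1 else w n.-1 + w n.
Proof.
move=> hn hi; rewrite /root_so_even; case: ifP => hin; first by rewrite inner_sl //; lia.
by rewrite inner_D !inner_e //; lia.
Qed.

Lemma inner_so_even_self n i : (2 <= n)%N -> (1 <= i <= n)%N ->
  inner n (root_so_even n i) (root_so_even n i) = 2.
Proof.
move=> hn hi; rewrite inner_so_even //; case: ifP => hin; rewrite /root_so_even hin.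
  by rewrite /root_sl; ecomp.
by ecomp.
Qed.

Lemma inner_so_odd n i w : (1 <= i <= n)%N ->
  inner n (root_so_odd n i) w = if (i < n)%N then w i - w i.+1 else w n.
Proof.
move=> hi; rewrite /root_so_odd; case: ifP => hin; first by rewrite inner_sl //; lia.
by rewrite inner_e //; lia.
Qed.

Lemma cartan_B n i j : (1 <= i <= n)%N ->
  cartan_of n (root_so_odd n) i j =
  if (i < n)%N then inner n (root_so_odd n i) (root_so_odd n j)
  else 2 * inner n (root_so_odd n i) (root_so_odd n j).
Proof.
move=> hi; case: ifP => hin.
  by apply: cartan_2; rewrite inner_so_odd // hin /root_so_odd hin /root_sl; ecomp.
rewrite /cartan_of.
have -> : inner n (root_so_odd n i) (root_so_odd n i) = 1.
  by rewrite inner_so_odd // hin /root_so_odd hin e_eq.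
by rewrite divz1.
Qed.

Section Serre.
Variables (K : fieldType) (A : algType K).

Lemma expr_sq0 (x : A) p : x * x = 0 -> (2 <= p)%N -> x ^+ p = 0.
Proof.
move=> h hp; rewrite -(subnK hp) exprD expr2 h mulr0 //.
Qed.

Lemma serre_comm (x : K) (Xi Xj : A) : Xi * Xj = Xj * Xi -> serre x 1 Xi Xj = 0.
Proof.
move=> h; rewrite /serre big_mkord !big_ord_recr big_ord0 /= add0r.
rewrite subn0 subnn !expr0 !expr1 !mul1r mulr0 add0r invr1 mulN1r mulr1 scale1r mulr1.
by rewrite scaleN1r h subrr.
Qed.

Lemma serre_zero (x : K) N (Xi Xj : A) : Xi * Xi = 0 -> (2 <= N)%N ->
  (N = 2%N -> Xi * Xj * Xi = 0) -> serre x N Xi Xj = 0.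
Proof.
move=> h2 hN h3; rewrite /serre big_nat_cond big1 // => m /andP [/andP [_ hm] _].
have [hm2|hm2] := leqP 2 m; first by rewrite expr_sq0 // !mul0r scaler0.
have [hm3|hm3] := leqP 2 (N - m); first by rewrite (expr_sq0 h2 hm3) mulr0 scaler0.
have em : m = 1%N by lia.
have eN : N = 2%N by lia.
by move: (h3 eN); rewrite em eN /= !expr1 => ->; rewrite scaler0.
Qed.

End Serre.

Section Basic.
Variables (K : fieldType) (A : algType K) (q : K) (n k : nat)
  (psi psis om omi : nat -> A).
Hypotheses (q0 : q != 0) (two0 : (2%:R : K) != 0)
  (H : Cl_relations q n k psi psis om omi).

Definition acomm (x y : A) := x * y = - (y * x).

Local Notation inr a := (1 <= a <= n)%N.

Lemma ac_pp a b : inr a -> inr b -> acomm (psi a) (psi b).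
Proof. move=> ha hb; have [_ [_ [_ [_ [_ [h _]]]]]] := H ha hb.
by rewrite /acomm; apply/eqP; rewrite -addr_eq0 h. Qed.
Lemma ac_ss a b : inr a -> inr b -> acomm (psis a) (psis b).
Proof. move=> ha hb; have [_ [_ [_ [_ [_ [_ [h _]]]]]]] := H ha hb.
by rewrite /acomm; apply/eqP; rewrite -addr_eq0 h. Qed.
Lemma ac_ps a b : inr a -> inr b -> a != b -> acomm (psi a) (psis b).
Proof. move=> ha hb ab; have [_ [_ [_ [_ [_ [_ [_ [_ [_ h]]]]]]]]] := H ha hb.
by rewrite /acomm; apply/eqP; rewrite -addr_eq0 h. Qed.
Lemma ac_sp a b : inr a -> inr b -> a != b -> acomm (psis a) (psi b).
Proof. move=> ha hb ab; have [_ [_ [_ [_ [_ [_ [_ [_ [_ h]]]]]]]]] := H hb ha.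
by rewrite /acomm; apply/eqP; rewrite -addr_eq0 addrC h // eq_sym. Qed.

Lemma sq0 (x : A) : acomm x x -> x * x = 0.
Proof.
move=> h; have : (2%:R : K) *: (x * x) = 0 by rewrite scaler_nat mulr2n {1}h addNr.
by move/eqP; rewrite scaler_eq0 (negbTE two0) /= => /eqP.
Qed.

Lemma comm_acac (f g h : A) : acomm f g -> acomm f h -> GRing.comm f (g * h).
Proof. by move=> fg fh; rewrite /GRing.comm mulrA fg mulNr -(mulrA g f) fh mulrN opprK mulrA. Qed.
Lemma comm_acacl (f g h : A) : acomm f h -> acomm g h -> GRing.comm (f * g) h.
Proof. move=> fh gh; apply: commr_sym; apply: comm_acac; rewrite /acomm.
  by rewrite fh opprK. by rewrite gh opprK. Qed.
Lemma zero_c (f y : A) : f * f = 0 -> GRing.comm f y -> f * y * f = 0.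
Proof. by move=> f2 fy; rewrite fy -mulrA f2 mulr0. Qed.
Lemma zero_a (f y : A) : f * f = 0 -> acomm f y -> f * y * f = 0.
Proof. by move=> f2 fy; rewrite fy mulNr -mulrA f2 mulr0 oppr0. Qed.
Lemma ac_mulr (f g h : A) : acomm f g -> GRing.comm f h -> acomm f (g * h).
Proof. by move=> fg fh; rewrite /acomm mulrA fg mulNr -(mulrA g f) fh mulrA. Qed.
Lemma ac_mull (f g h : A) : GRing.comm f g -> acomm f h -> acomm f (g * h).
Proof. by move=> fg fh; rewrite /acomm mulrA fg -(mulrA g f) fh mulrN mulrA. Qed.


Lemma zero1L (f a y : A) : f * f = 0 -> acomm f a -> f * a * f * y = 0.
Proof. by move=> h1 h2; rewrite zero_a // mul0r. Qed.
Lemma zero1R (x f a : A) : f * f = 0 -> acomm f a -> x * f * a * f = 0.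
Proof. by move=> h1 h2; rewrite -!mulrA (mulrA f) zero_a // mulr0. Qed.
Lemma acomm3 (f a b c : A) : acomm f a -> acomm f b -> acomm f c -> acomm f (a * b * c).
Proof. by move=> h1 h2 h3; apply: ac_mull => //; apply: comm_acac. Qed.
Lemma zero2L (f a b y : A) : f * f = 0 -> acomm f a -> acomm f b -> f * a * b * f * y = 0.
Proof. by move=> h0 h1 h2; rewrite -(mulrA f a b) zero_c ?mul0r //; apply: comm_acac. Qed.
Lemma zero2R (x f a b : A) : f * f = 0 -> acomm f a -> acomm f b -> x * f * a * b * f = 0.
Proof.
move=> h0 h1 h2; have z : f * (a * b) * f = 0 by rewrite zero_c //; apply: comm_acac.
have -> : x * f * a * b * f = x * (f * (a * b) * f) by rewrite !mulrA.
by rewrite z mulr0.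
Qed.
Lemma zero3L (f a b c y : A) : f * f = 0 -> acomm f a -> acomm f b -> acomm f c ->
  f * a * b * c * f * y = 0.
Proof. by move=> h0 h1 h2 h3; rewrite -(mulrA f a b) -(mulrA f) zero_a ?mul0r //; apply: acomm3. Qed.
Lemma zero3R (x f a b c : A) : f * f = 0 -> acomm f a -> acomm f b -> acomm f c ->
  x * f * a * b * c * f = 0.
Proof.
move=> h0 h1 h2 h3; have z : f * (a * b * c) * f = 0 by rewrite zero_a //; apply: acomm3.
have -> : x * f * a * b * c * f = x * (f * (a * b * c) * f) by rewrite !mulrA.
by rewrite z mulr0.
Qed.
Lemma zeroFF (x f y : A) : f * f = 0 -> x * f * f * y = 0.
Proof. by move=> h; rewrite -(mulrA x) h mulr0 mul0r. Qed.
Lemma comm4 (f g h l : A) : acomm f h -> acomm f l -> acomm g h -> acomm g l ->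
  GRing.comm (f * g) (h * l).
Proof.
move=> a1 a2 a3 a4; apply: commr_sym; apply: commrM; apply: commr_sym; exact: comm_acac.
Qed.

Lemma comm_inv (x y y' : A) : GRing.comm x y -> y * y' = 1 -> y' * y = 1 ->
  GRing.comm x y'.
Proof.
move=> xy h1 h2; rewrite /GRing.comm.
by rewrite -[x * y']mul1r -h2 -mulrA (mulrA y x) -xy -!mulrA h1 mulr1.
Qed.

Lemma om_omi a : inr a -> om a * omi a = 1.
Proof. by move=> ha; have [_ [h _]] := H ha ha. Qed.
Lemma omi_om a : inr a -> omi a * om a = 1.
Proof. by move=> ha; have [_ [_ [h _]]] := H ha ha. Qed.
Lemma c_oo a b : inr a -> inr b -> GRing.comm (om a) (om b).
Proof. by move=> ha hb; have [h _] := H ha hb. Qed.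
Lemma c_ooi a b : inr a -> inr b -> GRing.comm (om a) (omi b).
Proof. by move=> ha hb; apply: comm_inv (c_oo ha hb) (om_omi hb) (omi_om hb). Qed.
Lemma c_oio a b : inr a -> inr b -> GRing.comm (omi a) (om b).
Proof. by move=> ha hb; apply: commr_sym; apply: c_ooi. Qed.
Lemma c_oioi a b : inr a -> inr b -> GRing.comm (omi a) (omi b).
Proof. by move=> ha hb; apply: comm_inv (c_oio ha hb) (om_omi hb) (omi_om hb). Qed.

Definition hasw (X : A) (w : nat -> int) :=
  forall a, inr a -> om a * X * omi a = q ^ (w a) *: X.

Lemma hasw_psi b : inr b -> hasw (psi b) (e_ b).
Proof.
move=> hb a ha; have [_ [_ [_ [h _]]]] := H ha hb.
by rewrite h -scalerAl -mulrA om_omi // mulr1 /e_ -exprnP.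
Qed.
Lemma hasw_psis b : inr b -> hasw (psis b) (fun a => - e_ b a).
Proof.
move=> hb a ha; have [_ [_ [_ [_ [h _]]]]] := H ha hb.
by rewrite h -scalerAl -mulrA om_omi // mulr1 /e_ -exprnN.
Qed.
Lemma hasw_mul X Y w v : hasw X w -> hasw Y v -> hasw (X * Y) (fun a => w a + v a).
Proof.
move=> hX hY a ha.
have -> : om a * (X * Y) * omi a = (om a * X * omi a) * (om a * Y * omi a).
  by rewrite -!mulrA (mulrA (omi a)) omi_om // mul1r.
by rewrite hX // hY // -scalerAl -scalerAr scalerA expfzDr.
Qed.
Lemma hasw_ext X w w' : hasw X w -> (forall a, w a = w' a) -> hasw X w'.
Proof. by move=> hX e a ha; rewrite -e hX. Qed.
Lemma hasw_Z X w c : hasw X w -> hasw (c *: X) w.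
Proof. by move=> hX a ha; rewrite -scalerAr -scalerAl hX // scalerA mulrC -scalerA. Qed.
Lemma hasw_inv X w a : hasw X w -> inr a -> omi a * X * om a = q ^ (- w a) *: X.
Proof.
move=> hX ha.
have e : X = omi a * (om a * X * omi a) * om a.
  by rewrite !mulrA omi_om // mul1r -mulrA omi_om // mulr1.
by rewrite {2}e hX // -scalerAr -scalerAl scalerA -expfzDr // addNr expr0z scale1r.
Qed.


Lemma addKB (x y z : A) : (x + y) - (x + z) = y - z.
Proof. by rewrite opprD addrACA subrr add0r. Qed.

Lemma Kc2 a b Y w : inr a -> inr b -> hasw Y w ->
  om a * omi b * Y * (om b * omi a) = q ^ (w a - w b) *: Y.
Proof.
move=> ha hb hY.
have -> : om a * omi b * Y * (om b * omi a) = om a * (omi b * Y * om b) * omi a.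
  by rewrite !mulrA.
by rewrite (hasw_inv hY hb) -scalerAr -scalerAl (hY a ha) scalerA -expfzDr // addrC.
Qed.
Lemma Kc_D p m Y w : inr p -> inr m -> hasw Y w ->
  (q *: (om p * om m)) * Y * (q^-1 *: (omi m * omi p)) = q ^ (w p + w m) *: Y.
Proof.
move=> hp hm hY; rewrite -scalerAl -scalerAl -scalerAr scalerA mulfV // scale1r.
have -> : om p * om m * Y * (omi m * omi p) = om p * (om m * Y * omi m) * omi p.
  by rewrite !mulrA.
by rewrite (hY m hm) -scalerAr -scalerAl (hY p hp) scalerA -expfzDr // addrC.
Qed.
Lemma Kc_B m s Y w : inr m -> s != 0 -> hasw Y w ->
  (s *: om m) * Y * (s^-1 *: omi m) = q ^ (w m) *: Y.
Proof.
move=> hm s0 hY; rewrite -scalerAl -scalerAr -scalerAl scalerA mulVf // scale1r.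
exact: hY.
Qed.

Lemma subBB (a b c : A) : (a - b) - (c - b) = a - c.
Proof. by rewrite opprB addrA subrK. Qed.

Hypothesis hq2 : q ^+ (2 * k) != 1.
Let c := q ^+ k.
Let D := c - c^-1.
Lemma c0 : c != 0. Proof. by rewrite expf_neq0. Qed.
Lemma D0 : D != 0.
Proof.
rewrite /D subr_eq0; apply/negP => /eqP h; move: hq2.
by rewrite mulnC exprM -/c expr2 {2}h mulfV ?eqxx // c0.
Qed.

Lemma cc1 : c * c - 1 != 0.
Proof. by rewrite subr_eq0 -expr2 -exprM mulnC. Qed.

Definition N a := psis a * psi a.
Definition M a := psi a * psis a.
Definition X a := om a ^+ k.
Definition Xi a := omi a ^+ k.

Lemma N_X a : inr a -> N a = D^-1 *: (Xi a - X a).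
Proof.
move=> ha; have [_ [_ [_ [_ [_ [_ [_ [h8 [h9 _]]]]]]]]] := H ha ha.
have e : D *: N a = Xi a - X a by rewrite /Xi /X -h8 -h9 addKB /D scalerBl.
by rewrite -e scalerA mulVf ?D0 // scale1r.
Qed.
Lemma M_X a : inr a -> M a = X a - c^-1 *: N a.
Proof.
move=> ha; have [_ [_ [_ [_ [_ [_ [_ [h8 [h9 _]]]]]]]]] := H ha ha.
by rewrite /X -h9 addrK.
Qed.
Lemma M_Xi a : inr a -> M a = Xi a - c *: N a.
Proof.
move=> ha; have [_ [_ [_ [_ [_ [_ [_ [h8 [h9 _]]]]]]]]] := H ha ha.
by rewrite /Xi -h8 addrK.
Qed.

Lemma c_psi_N a b : inr a -> inr b -> b != a -> GRing.comm (psi b) (N a).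
Proof. by move=> ha hb ba; apply: comm_acac; [apply: ac_ps|apply: ac_pp]. Qed.
Lemma c_psis_N a b : inr a -> inr b -> b != a -> GRing.comm (psis b) (N a).
Proof. by move=> ha hb ba; apply: comm_acac; [apply: ac_ss|apply: ac_sp]. Qed.
Lemma c_psi_M a b : inr a -> inr b -> b != a -> GRing.comm (psi b) (M a).
Proof. by move=> ha hb ba; apply: comm_acac; [apply: ac_pp|apply: ac_ps]. Qed.
Lemma c_psis_M a b : inr a -> inr b -> b != a -> GRing.comm (psis b) (M a).
Proof. by move=> ha hb ba; apply: comm_acac; [apply: ac_sp|apply: ac_ss]. Qed.
Lemma c_NN a b : inr a -> inr b -> GRing.comm (N a) (N b).
Proof.
move=> ha hb; have [->|ab] := eqVneq a b; first exact: commr_refl.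
apply: commr_sym; apply: commrM; apply: commr_sym.
  exact: c_psis_N.
exact: c_psi_N.
Qed.
Lemma c_XX a b : inr a -> inr b -> GRing.comm (X a) (X b).
Proof. by move=> ha hb; apply: commrX; apply: commr_sym; apply: commrX; apply: c_oo. Qed.
Lemma c_XXi a b : inr a -> inr b -> GRing.comm (X a) (Xi b).
Proof. by move=> ha hb; apply: commrX; apply: commr_sym; apply: commrX; apply: c_oio. Qed.
Lemma c_XiX a b : inr a -> inr b -> GRing.comm (Xi a) (X b).
Proof. by move=> ha hb; apply: commr_sym; apply: c_XXi. Qed.
Lemma c_XiXi a b : inr a -> inr b -> GRing.comm (Xi a) (Xi b).
Proof. by move=> ha hb; apply: commrX; apply: commr_sym; apply: commrX; apply: c_oioi. Qed.

Lemma EF_sl a b : inr a -> inr b -> a != b ->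
  psi a * psis b * (psi b * psis a) - psi b * psis a * (psi a * psis b) =
  D^-1 *: ((om a * omi b) ^+ k - (om b * omi a) ^+ k).
Proof.
move=> ha hb ab.
have EF : psi a * psis b * (psi b * psis a) = N b * M a.
  rewrite !mulrA -(mulrA (psi a) (psis b) (psi b)) -/(N b).
  by rewrite (c_psi_N hb ha ab) -mulrA.
have FE : psi b * psis a * (psi a * psis b) = N a * M b.
  rewrite !mulrA -(mulrA (psi b) (psis a) (psi a)) -/(N a).
  by rewrite (c_psi_N ha hb) 1?eq_sym // -mulrA.
rewrite EF FE (M_X ha) (M_X hb) !mulrBr -!scalerAr (c_NN hb ha) subBB.
rewrite (N_X ha) (N_X hb) -!scalerAl -scalerBr; congr (_ *: _).
rewrite !mulrBl (c_XX hb ha) subBB.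
rewrite (exprMn_comm _ (c_ooi ha hb)) (exprMn_comm _ (c_ooi hb ha)) -/(X a) -/(X b) -/(Xi a) -/(Xi b).
by rewrite (c_XiX hb ha) (c_XiX ha hb).
Qed.

Lemma add4ACA (x1 x2 x3 x4 y1 y2 y3 y4 : A) :
  (x1 + x2 + x3 + x4) + (y1 + y2 + y3 + y4) = (x1 + y1) + (x2 + y2) + (x3 + y3) + (x4 + y4).
Proof. by rewrite addrACA (addrACA (x1 + x2)) (addrACA x1). Qed.

Definition lcf (us : A * A * A * A) (a1 a2 a3 a4 : K) :=
  a1 *: us.1.1.1 + a2 *: us.1.1.2 + a3 *: us.1.2 + a4 *: us.2.
Lemma lcfD us a1 a2 a3 a4 b1 b2 b3 b4 :
  lcf us a1 a2 a3 a4 + lcf us b1 b2 b3 b4 =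
  lcf us (a1 + b1) (a2 + b2) (a3 + b3) (a4 + b4).
Proof. by rewrite /lcf !scalerDl add4ACA. Qed.
Lemma lcfN us a1 a2 a3 a4 :
  - lcf us a1 a2 a3 a4 = lcf us (- a1) (- a2) (- a3) (- a4).
Proof. by rewrite /lcf !scaleNr !opprD. Qed.
Lemma lcfZ us a1 a2 a3 a4 s :
  s *: lcf us a1 a2 a3 a4 = lcf us (s * a1) (s * a2) (s * a3) (s * a4).
Proof. by rewrite /lcf !scalerDr !scalerA. Qed.
Lemma lcf1 us : us.1.1.1 = lcf us 1 0 0 0.
Proof. by rewrite /lcf scale1r !scale0r !addr0. Qed.
Lemma lcf2 us : us.1.1.2 = lcf us 0 1 0 0.
Proof. by rewrite /lcf scale1r !scale0r add0r !addr0. Qed.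
Lemma lcf3 us : us.1.2 = lcf us 0 0 1 0.
Proof. by rewrite /lcf scale1r !scale0r !add0r !addr0. Qed.
Lemma lcf4 us : us.2 = lcf us 0 0 0 1.
Proof. by rewrite /lcf scale1r !scale0r !add0r. Qed.
Lemma lcf_eq us a1 a2 a3 a4 b1 b2 b3 b4 :
  a1 = b1 -> a2 = b2 -> a3 = b3 -> a4 = b4 ->
  lcf us a1 a2 a3 a4 = lcf us b1 b2 b3 b4.
Proof. by move=> -> -> -> ->. Qed.

Lemma EF_D p m : inr p -> inr m -> p != m ->
  psi p * psi m * (psis m * psis p) - psis m * psis p * (psi p * psi m) =
  D^-1 *: ((q *: (om p * om m)) ^+ k - (q^-1 *: (omi m * omi p)) ^+ k).
Proof.
move=> hp hm pm.
have EF : psi p * psi m * (psis m * psis p) = M m * M p.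
  rewrite !mulrA -(mulrA (psi p) (psi m) (psis m)) -/(M m).
  by rewrite (c_psi_M hm hp pm) -mulrA.
have FE : psis m * psis p * (psi p * psi m) = N p * N m.
  rewrite !mulrA -(mulrA (psis m) (psis p) (psi p)) -/(N p).
  by rewrite (c_psis_N hp hm) 1?eq_sym // -mulrA.
rewrite EF FE (M_X hm) (M_Xi hp) (N_X hm) (N_X hp).
rewrite !exprZn (exprMn_comm _ (c_oo hp hm)) (exprMn_comm _ (c_oioi hm hp)) exprVn.
rewrite -/(X p) -/(X m) -/(Xi m) -/(Xi p) -/c.
repeat first [rewrite mulrBr | rewrite mulrBl | rewrite -scalerAl | rewrite -scalerAr
    | rewrite scalerBr | rewrite scalerA].
rewrite (c_XX hp hm) (c_XiX hp hm) (c_XXi hp hm) (c_XiXi hp hm).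
pose us := (X m * X p, X m * Xi p, Xi m * X p, Xi m * Xi p).
have e1 : X m * X p = lcf us 1 0 0 0 := lcf1 us.
have e2 : X m * Xi p = lcf us 0 1 0 0 := lcf2 us.
have e3 : Xi m * X p = lcf us 0 0 1 0 := lcf3 us.
have e4 : Xi m * Xi p = lcf us 0 0 0 1 := lcf4 us.
rewrite e1 e2 e3 e4; repeat first [rewrite lcfZ | rewrite lcfN | rewrite lcfD].
have hc := c0; have hD := D0.
have hcc := cc1.
by apply: lcf_eq; move: hc hcc; rewrite /D /c; move: (q ^+ k) => x hx hxx; field; rewrite hx hxx.
Qed.

Lemma EF_B m s : inr m -> s ^+ 2 = q ->
  psi m * psis m - psis m * psi m =
  (s ^+ k - s ^- k)^-1 *: ((s *: om m) ^+ k - (s^-1 *: omi m) ^+ k).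
Proof.
move=> hm hs.
rewrite -/(M m) -/(N m) (M_X hm) (N_X hm) !exprZn exprVn -/(X m) -/(Xi m).
repeat first [rewrite scalerBr | rewrite scalerA].
pose us := (X m, Xi m, (0 : A), (0 : A)).
have e1 : X m = lcf us 1 0 0 0 := lcf1 us.
have e2 : Xi m = lcf us 0 1 0 0 := lcf2 us.
rewrite e1 e2; repeat first [rewrite lcfZ | rewrite lcfN | rewrite lcfD].
have hc := c0; have hcc := cc1.
have s0 : s != 0 by apply: contraNneq q0 => s0; rewrite -hs s0 expr0n.
have ec : c = s ^+ k * s ^+ k by rewrite /c -hs -exprM -exprD mul2n addnn.
have t0 : s ^+ k != 0 by rewrite expf_neq0.
move: hcc; rewrite /D ec; move: (s ^+ k) t0 => x hx hxx.
have hx2 : x * x - 1 != 0.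
  apply: contraNneq hxx => /eqP; rewrite subr_eq0 => /eqP ->.
  by rewrite mulr1 subrr.
by apply: lcf_eq; field; rewrite hx hx2 hxx.
Qed.

Lemma c_ww (x1 x2 y1 y2 : A) : GRing.comm x1 y1 -> GRing.comm x1 y2 ->
  GRing.comm x2 y1 -> GRing.comm x2 y2 -> GRing.comm (x1 * x2) (y1 * y2).
Proof.
move=> h1 h2 h3 h4; apply: commr_sym; apply: commrM; apply: commr_sym; exact: commrM.
Qed.

Lemma ac_any a b : inr a -> inr b -> (acomm (psi a) (psi b) /\ acomm (psis a) (psis b)) /\
  (a != b -> acomm (psi a) (psis b) /\ acomm (psis a) (psi b)).
Proof.
move=> ha hb; split; first by split; [apply: ac_pp|apply: ac_ss].
by move=> ab; split; [apply: ac_ps|apply: ac_sp].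
Qed.

Lemma part_sl : U_relations q k n.-1 (fun _ => 1%N) (cartan_of n (fun i => root_sl i))
  (Th_E psi psis) (Th_F psi psis) (Th_K om omi) (Th_Ki om omi).
Proof.
move=> i j hi hj; cbv zeta; rewrite expr1 /Th_E /Th_F /Th_K /Th_Ki.
have hi' : (1 <= i < n)%N by lia.
have hj' : (1 <= j < n)%N by lia.
have ri : inr i by lia. have ri1 : inr i.+1 by lia.
have rj : inr j by lia. have rj1 : inr j.+1 by lia.
have eca : cartan_of n (fun i => root_sl i) i j = root_sl j i - root_sl j i.+1.
  by rewrite cartan_2 ?inner_sl_sl // inner_sl.
have hE : hasw (psi j * psis j.+1) (root_sl j) := hasw_mul (hasw_psi rj) (hasw_psis rj1).
have hF := hasw_mul (hasw_psi rj1) (hasw_psis rj).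
split.
  by apply: c_ww; [apply: c_oo|apply: c_ooi|apply: c_oio|apply: c_oioi].
split; first by rewrite mulrA -(mulrA (om i)) omi_om // mulr1 om_omi.
split; first by rewrite mulrA -(mulrA (om i.+1)) omi_om // mulr1 om_omi.
split; first by rewrite (Kc2 ri ri1 hE) eca.
split.
  rewrite (Kc2 ri ri1 hF) eca; congr (q ^ _ *: _); rewrite /root_sl; lia.
split.
  have [<-|ij] := eqVneq i j.
    by apply: EF_sl => //; lia.
  apply/eqP; rewrite subr_eq0; apply/eqP.
  apply: comm4; [apply: ac_pp|apply: ac_ps|apply: ac_sp|apply: ac_ss]; lia.
move=> ij; rewrite eca.
have [adj|nadj] := boolP ((j == i.+1) || (i == j.+1)).
  have -> : root_sl j i - root_sl j i.+1 = -1.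
    rewrite /root_sl; case/orP: adj => /eqP ->;
    repeat first [rewrite e_eq | rewrite e_ne; last by lia]; by [].
  have E2 : psi i * psis i.+1 * (psi i * psis i.+1) = 0.
    by rewrite mulrA zero1L //; [apply: sq0; apply: ac_pp|apply: ac_ps]; lia.
  have F2 : psi i.+1 * psis i * (psi i.+1 * psis i) = 0.
    by rewrite mulrA zero1L //; [apply: sq0; apply: ac_pp|apply: ac_ps]; lia.
  split; apply: serre_zero => // _; rewrite !mulrA; case/orP: adj => /eqP e; subst.
  - by apply: zero3L; [apply: sq0; apply: ac_pp|apply: ac_ps|apply: ac_pp|apply: ac_ps]; lia.
  - by apply: zero3R; [apply: sq0; apply: ac_ss|apply: ac_sp|apply: ac_ss|apply: ac_sp]; lia.
  - by apply: zero3R; [apply: sq0; apply: ac_ss|apply: ac_sp|apply: ac_ss|apply: ac_sp]; lia.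
  - by apply: zero3L; [apply: sq0; apply: ac_pp|apply: ac_ps|apply: ac_pp|apply: ac_ps]; lia.
have -> : root_sl j i - root_sl j i.+1 = 0.
  rewrite /root_sl; repeat first [rewrite e_ne; last by lia]; by [].
split; apply: serre_comm;
  (apply: comm4; [apply: ac_pp|apply: ac_ps|apply: ac_sp|apply: ac_ss]; lia).
Qed.

Ltac acs := (first [apply: ac_pp | apply: ac_ss | apply: ac_ps | apply: ac_sp]); lia.
Ltac zs := first [apply: sq0; acs | acs].

Lemma zero2 (f a b : A) : f * f = 0 -> acomm f a -> acomm f b -> f * a * b * f = 0.
Proof. by move=> h0 h1 h2; rewrite -(mulrA f a b) zero_c //; apply: comm_acac. Qed.

Lemma commZl (a : K) (x y : A) : GRing.comm x y -> GRing.comm (a *: x) y.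
Proof. by move=> h; rewrite /GRing.comm -scalerAl -scalerAr h. Qed.
Lemma commZr (a : K) (x y : A) : GRing.comm x y -> GRing.comm x (a *: y).
Proof. by move=> h; apply: commr_sym; apply: commZl; apply: commr_sym. Qed.

Section PartD.
Hypothesis hn : (2 <= n)%N.

Lemma Kc_Dgen i Y w : (1 <= i <= n)%N -> hasw Y w ->
  ThD_K q n om omi i * Y * ThD_Ki q n om omi i = q ^ (inner n (root_so_even n i) w) *: Y.
Proof.
move=> hi hY; rewrite inner_so_even // /ThD_K /ThD_Ki; case: ifP => hin.
  by rewrite /Th_K /Th_Ki (Kc2 _ _ hY) //; lia.
by rewrite (Kc_D _ _ hY) //; lia.
Qed.

Lemma hasw_ED j : (1 <= j <= n)%N -> hasw (ThD_E n psi psis j) (root_so_even n j).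
Proof.
move=> hj; rewrite /ThD_E /root_so_even; case: ifP => hjn.
  by apply: hasw_mul; [apply: hasw_psi|apply: hasw_psis]; lia.
by apply: hasw_mul; apply: hasw_psi; lia.
Qed.

Lemma hasw_FD j : (1 <= j <= n)%N ->
  hasw (ThD_F n psi psis j) (fun a => - root_so_even n j a).
Proof.
move=> hj; rewrite /ThD_F /root_so_even; case: ifP => hjn.
  apply: hasw_ext; first by apply: hasw_mul; [apply: hasw_psi|apply: hasw_psis]; lia.
  by move=> a /=; rewrite /root_sl; lia.
apply: hasw_ext; first by apply: hasw_mul; apply: hasw_psis; lia.
by move=> a /=; lia.
Qed.

Lemma part_D : U_relations q k n (fun _ => 1%N) (cartan_of n (root_so_even n))
  (ThD_E n psi psis) (ThD_F n psi psis) (ThD_K q n om omi) (ThD_Ki q n om omi).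
Proof.
move=> i j hi hj; cbv zeta; rewrite expr1.
have rp : inr n.-1 by lia. have rn : inr n by lia.
have ep : n.-1.+1 = n by lia.
have eca : cartan_of n (root_so_even n) i j = inner n (root_so_even n i) (root_so_even n j).
  by apply: cartan_2; apply: inner_so_even_self.
split.
  rewrite /ThD_K; case: ifP => hin; case: ifP => hjn; rewrite /Th_K;
   repeat first [apply: commZl | apply: commZr];
   apply: c_ww; first [apply: c_oo | apply: c_ooi | apply: c_oio | apply: c_oioi]; lia.
split.
  rewrite /ThD_K /ThD_Ki; case: ifP => hin.
    by rewrite /Th_K /Th_Ki mulrA -(mulrA (om i)) omi_om ?mulr1 ?om_omi //; lia.
  rewrite -scalerAl -scalerAr scalerA mulfV // scale1r.
  by rewrite mulrA -(mulrA (om n.-1)) om_omi // mulr1 om_omi.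
split.
  rewrite /ThD_K /ThD_Ki; case: ifP => hin.
    by rewrite /Th_K /Th_Ki mulrA -(mulrA (om i.+1)) omi_om ?mulr1 ?om_omi //; lia.
  rewrite -scalerAl -scalerAr scalerA mulVf // scale1r.
  by rewrite mulrA -(mulrA (omi n)) omi_om // mulr1 omi_om.
split; first by rewrite (Kc_Dgen hi (hasw_ED hj)) eca.
split; first by rewrite (Kc_Dgen hi (hasw_FD hj)) eca inner_Nr.
rewrite eca inner_so_even // /root_so_even /ThD_E /ThD_F /ThD_K /ThD_Ki /Th_E /Th_F.
have [hin|hin] := ltnP i n; have [hjn|hjn] := ltnP j n.
-
  have P := part_sl (i := i) (j := j); cbv zeta in P; rewrite expr1 in P.
  have [_ [_ [_ [_ [_ [P6 P7]]]]]] := P ltac:(lia) ltac:(lia).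
  split; first exact: P6.
  have hi' : (1 <= i < n)%N by lia.
  move=> ij; move: (P7 ij); rewrite cartan_2 ?inner_sl_sl ?inner_sl //.
-
  have ej : j = n by lia. subst j.
  have ni : i != n by lia.
  split.
    rewrite (negbTE ni); apply/eqP; rewrite subr_eq0; apply/eqP.
    have [ip|ip] := eqVneq i n.-1.
      subst i; rewrite ep !mulrA zeroFF; last by zs.
      by rewrite zero2 //; zs.
    by apply: comm4; acs.
  move=> _.
  have [ip|ip] := eqVneq i n.-1.
    subst i; rewrite ep.
    have -> : e_ n.-1 n.-1 + e_ n n.-1 - (e_ n.-1 n + e_ n n) = 0 by ecomp.
    split; apply: serre_comm.
      by rewrite !mulrA !zero1L //; zs.
    by rewrite !mulrA !zero1R //; zs.
  have [ip1|ip1] := eqVneq i.+1 n.-1.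
    have -> : e_ n.-1 i + e_ n i - (e_ n.-1 i.+1 + e_ n i.+1) = -1 by ecomp.
    split; apply: serre_zero => //.
    + by rewrite mulrA zero1L //; zs.
    + by move=> _; rewrite -ip1 !mulrA zero3L //; zs.
    + by rewrite mulrA zero1L //; zs.
    + by move=> _; rewrite -ip1 !mulrA zero3R //; zs.
  have -> : e_ n.-1 i + e_ n i - (e_ n.-1 i.+1 + e_ n i.+1) = 0 by ecomp.
  by split; apply: serre_comm; apply: comm4; acs.
-
  have ei : i = n by lia. subst i.
  have nj : n != j by lia.
  split.
    rewrite (negbTE nj); apply/eqP; rewrite subr_eq0; apply/eqP.
    have [jp|jp] := eqVneq j n.-1.
      subst j; rewrite ep !mulrA zeroFF; last by zs.
      by rewrite zero2 //; zs.
    by apply: comm4; acs.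
  move=> _; rewrite /root_sl.
  have [jp|jp] := eqVneq j n.-1.
    subst j; rewrite ep.
    have -> : e_ n.-1 n.-1 - e_ n n.-1 + (e_ n.-1 n - e_ n n) = 0 by ecomp.
    split; apply: serre_comm.
      by rewrite !mulrA !zero1L //; zs.
    by rewrite !mulrA !zero1R //; zs.
  have [jp1|jp1] := eqVneq j.+1 n.-1.
    have -> : e_ j n.-1 - e_ j.+1 n.-1 + (e_ j n - e_ j.+1 n) = -1 by ecomp.
    split; apply: serre_zero => //.
    + by rewrite mulrA zero1L //; zs.
    + by move=> _; rewrite jp1 !mulrA zero3R //; zs.
    + by rewrite mulrA zero1L //; zs.
    + by move=> _; rewrite jp1 !mulrA zero3L //; zs.
  have -> : e_ j n.-1 - e_ j.+1 n.-1 + (e_ j n - e_ j.+1 n) = 0 by ecomp.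
  by split; apply: serre_comm; apply: comm4; acs.
-
  have ei : i = n by lia. have ej : j = n by lia. subst i j.
  split; last by move=> /eqP.
  rewrite ifT; last exact/eqP.
  by apply: EF_D => //; lia.
Qed.

End PartD.

Section PartB.
Variable s : K.
Hypothesis hs : s ^+ 2 = q.

Lemma s0 : s != 0.
Proof. by apply: contraNneq q0 => e; rewrite -hs e expr0n. Qed.

Lemma Kc_Bgen i Y w : (1 <= i <= n)%N -> hasw Y w ->
  ThB_K n om omi s i * Y * ThB_Ki n om omi s i = q ^ (inner n (root_so_odd n i) w) *: Y.
Proof.
move=> hi hY; rewrite inner_so_odd // /ThB_K /ThB_Ki; case: ifP => hin.
  by rewrite /Th_K /Th_Ki (Kc2 _ _ hY) //; lia.
by rewrite (Kc_B _ s0 hY) //; lia.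
Qed.

Lemma hasw_EB j : (1 <= j <= n)%N -> hasw (ThB_E n psi psis j) (root_so_odd n j).
Proof.
move=> hj; rewrite /ThB_E /root_so_odd; case: ifP => hjn.
  by apply: hasw_mul; [apply: hasw_psi|apply: hasw_psis]; lia.
by apply: hasw_psi; lia.
Qed.

Lemma hasw_FB j : (1 <= j <= n)%N ->
  hasw (ThB_F n psi psis j) (fun a => - root_so_odd n j a).
Proof.
move=> hj; rewrite /ThB_F /root_so_odd; case: ifP => hjn.
  apply: hasw_ext; first by apply: hasw_mul; [apply: hasw_psi|apply: hasw_psis]; lia.
  by move=> a /=; rewrite /root_sl; lia.
by apply: hasw_psis; lia.
Qed.

Lemma Q_B i j : (1 <= i <= n)%N ->
  (s ^+ d_so_odd n i) ^ cartan_of n (root_so_odd n) i j =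
  q ^ inner n (root_so_odd n i) (root_so_odd n j).
Proof.
move=> hi; rewrite cartan_B // /d_so_odd; case: ifP => hin; first by rewrite hs.
by rewrite expr1 -exprz_exp -exprnP hs.
Qed.

Lemma part_B : U_relations s k n (d_so_odd n) (cartan_of n (root_so_odd n))
  (ThB_E n psi psis) (ThB_F n psi psis) (ThB_K n om omi s) (ThB_Ki n om omi s).
Proof.
move=> i j hi hj; cbv zeta.
have rn : inr n by lia.
have hs0 := s0.
split.
  rewrite /ThB_K; case: ifP => hin; case: ifP => hjn; rewrite /Th_K;
   repeat first [apply: commZl | apply: commZr].
  - by apply: c_ww; first [apply: c_oo | apply: c_ooi | apply: c_oio | apply: c_oioi]; lia.
  - by apply: commr_sym; apply: commrM; [apply: c_oo|apply: c_ooi]; lia.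
  - by apply: commrM; [apply: c_oo|apply: c_ooi]; lia.
  - exact: commr_refl.
split.
  rewrite /ThB_K /ThB_Ki; case: ifP => hin.
    by rewrite /Th_K /Th_Ki mulrA -(mulrA (om i)) omi_om ?mulr1 ?om_omi //; lia.
  by rewrite -scalerAl -scalerAr scalerA mulfV // scale1r om_omi.
split.
  rewrite /ThB_K /ThB_Ki; case: ifP => hin.
    by rewrite /Th_K /Th_Ki mulrA -(mulrA (om i.+1)) omi_om ?mulr1 ?om_omi //; lia.
  by rewrite -scalerAl -scalerAr scalerA mulVf // scale1r omi_om.
split; first by rewrite (Kc_Bgen hi (hasw_EB hj)) Q_B.
split; first by rewrite (Kc_Bgen hi (hasw_FB hj)) inner_Nr -!invr_expz Q_B.
rewrite cartan_B // inner_so_odd // /root_so_odd /ThB_E /ThB_F /ThB_K /ThB_Ki /Th_E /Th_F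
  /d_so_odd.
have [hin|hin] := ltnP i n; have [hjn|hjn] := ltnP j n.
-
  rewrite hs.
  have P := part_sl (i := i) (j := j); cbv zeta in P; rewrite expr1 in P.
  have [_ [_ [_ [_ [_ [P6 P7]]]]]] := P ltac:(lia) ltac:(lia).
  split; first exact: P6.
  have hi' : (1 <= i < n)%N by lia.
  move=> ij; move: (P7 ij); rewrite cartan_2 ?inner_sl_sl ?inner_sl //.
-
  have ej : j = n by lia. subst j.
  have ni : i != n by lia.
  rewrite hs; split.
    rewrite (negbTE ni); apply/eqP; rewrite subr_eq0; apply/eqP.
    by apply: comm_acacl; acs.
  move=> _.
  have [ip1|ip1] := eqVneq i.+1 n.
    have -> : e_ n i - e_ n i.+1 = -1 by ecomp.
    split; apply: serre_zero => //.
    + by rewrite mulrA zero1L //; zs.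
    + by move=> _; rewrite ip1 !mulrA zero2L //; zs.
    + by rewrite mulrA zero1L //; zs.
    + by move=> _; rewrite ip1 !mulrA zero2R //; zs.
  have -> : e_ n i - e_ n i.+1 = 0 by ecomp.
  by split; apply: serre_comm; apply: comm_acacl; acs.
-
  have ei : i = n by lia. subst i.
  have nj : n != j by lia.
  split.
    rewrite (negbTE nj); apply/eqP; rewrite subr_eq0; apply/eqP.
    by apply: comm_acac; acs.
  move=> _; rewrite /root_sl.
  have [jp|jp] := eqVneq j.+1 n.
    have -> : 2 * (e_ j n - e_ j.+1 n) = -2 by ecomp.
    by split; apply: serre_zero => //; zs.
  have -> : 2 * (e_ j n - e_ j.+1 n) = 0 by ecomp.
  by split; apply: serre_comm; apply: comm_acac; acs.
-
  have ei : i = n by lia. have ej : j = n by lia. subst i j.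
  split; last by move=> /eqP.
  rewrite ifT; last exact/eqP.
  by rewrite expr1; apply: EF_B.
Qed.

End PartB.

End Basic.

Unset Implicit Arguments.

Theorem proposition3p17 (K : fieldType) (q : K) (n k : nat) :
  (2%:R : K) != 0 -> q != 0 -> (0 < n)%N -> (0 < k)%N -> q ^+ (2 * k) != 1 ->
  forall (A : algType K) (psi psis om omi : nat -> A),
  Cl_relations q n k psi psis om omi ->
  [/\ U_relations q k n.-1 (fun _ => 1%N) (cartan_of n (fun i => root_sl i))
        (Th_E psi psis) (Th_F psi psis) (Th_K om omi) (Th_Ki om omi),
      (2 <= n)%N ->
      U_relations q k n (fun _ => 1%N) (cartan_of n (root_so_even n))
        (ThD_E n psi psis) (ThD_F n psi psis) (ThD_K q n om omi) (ThD_Ki q n om omi) &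
      forall s : K, s ^+ 2 = q ->
      U_relations s k n (d_so_odd n) (cartan_of n (root_so_odd n))
        (ThB_E n psi psis) (ThB_F n psi psis) (ThB_K n om omi s) (ThB_Ki n om omi s)].
Proof.
move=> two0 q0 _ _ hq2 A psi psis om omi H.
split.
- exact: part_sl q0 two0 H hq2.
- move=> hn; exact: part_D q0 two0 H hq2 hn.
- move=> s hs; exact: part_B q0 two0 H hq2 s hs.
Qed.
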